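(* Let $\epsilon>0$ and let $a,b,c,d\in\Lambda_+$ satisfy: (1) $ad-bc\neq0$; (2) $\mathrm{val}(a)\le\mathrm{val}(b),\mathrm{val}(c)$ and $\mathrm{val}(d)\le\mathrm{val}(b),\mathrm{val}(c)$; (3) $\mathrm{val}(a)+\mathrm{val}(d)<\mathrm{val}(b)+\mathrm{val}(c)$. Let $$F(z_1,z_2)=\Bigl(az_1+bz_2+\sum_{v}\lambda_vz^v,\ cz_1+dz_2+\sum_v\eta_vz^v\Bigr),$$ where $v=(v_1,v_2)$ ranges over $\mathbb Z_{\ge0}^2$ with $v_1+v_2\ge2$, $z^v=z_1^{v_1}z_2^{v_2}$, and the coefficients satisfy $\mathrm{val}(\lambda_v)\ge\mathrm{val}(a)$, $\mathrm{val}(\eta_v)\ge\mathrm{val}(d)$ for all $v$, and (4) $\mathrm{val}(\lambda_{(i,j)})\ge\mathrm{val}(d)$ whenever $j\ge1$ and $\mathrm{val}(\eta_{(i,j)})\ge\mathrm{val}(a)$ whenever $i\ge1$. Then for all $C_1,C_2\in\Lambda$ with $\mathrm{val}(C_1)>\mathrm{val}(a)+\epsilon$ and $\mathrm{val}(C_2)>\mathrm{val}(d)+\epsilon$, the equation $F(z_1,z_2)=(C_1,C_2)$ has a unique solution $(z_1,z_2)\in(T^\epsilon\Lambda_0)^2$.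
   Context: $\Lambda$ is the Novikov field $\{\sum_{i\ge0}c_iT^{\lambda_i}: c_i\in\mathbb C,\ \lambda_i\to\infty\}$, $\mathrm{val}(\sum c_iT^{\lambda_i})=\min\{\lambda_i:c_i\ne0\}$ (with $\mathrm{val}(0)=\infty$), $\Lambda_0=\{\mathrm{val}\ge0\}$, $\Lambda_+=\{\mathrm{val}>0\}$, and $T^\epsilon\Lambda_0=\{x:\mathrm{val}(x)\ge\epsilon\}$. The series defining $F$ converge in the $T$-adic topology on $(T^\epsilon\Lambda_0)^2$. *)

(* Defs.v *)
From HB Require Import structures.
From mathcomp Require Import all_boot all_order all_algebra.
From mathcomp Require Import all_classical all_reals.
From mathcomp Require Import ereal.
From mathcomp Require Import complex.
From mathcomp Require Import Rstruct.
Import Order.TTheory GRing.Theory Num.Theory.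

Set Implicit Arguments.
Unset Strict Implicit.
Unset Printing Implicit Defensive.

Local Open Scope classical_set_scope.
Local Open Scope ring_scope.

Definition RR : realType := Rdefinitions.R.
Definition CC := RR[i].

(* An element of the Novikov field  sum_i c_i T^{lambda_i}  is represented by
   its coefficient function  lambda |-> (coefficient of T^lambda).  *)
Definition nov := RR -> CC.

(* Membership in Lambda: lambda_i -> infinity, i.e. for every bound M only
   finitely many exponents below M carry a non-zero coefficient. *)
Definition is_nov (x : nov) : Prop :=
  forall M : RR, finite_set [set l : RR | l < M /\ x l != 0].

(* valuation: min of the support; val 0 = +oo *)
Definition nval (x : nov) : \bar RR :=
  ereal_inf [set l%:E | l in [set l : RR | x l != 0]].

Definition nzero : nov := fun _ => 0.
Definition none : nov := fun l => if l == 0 then 1 else 0.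
Definition nadd (x y : nov) : nov := fun l => x l + y l.
Definition nopp (x : nov) : nov := fun l => - x l.
Definition nsub (x y : nov) : nov := nadd x (nopp y).
(* Cauchy product: the sum has finite support when x, y are in Lambda *)
Definition nmul (x y : nov) : nov :=
  fun l => (\sum_(m \in [set: RR]) x m * y (l - m))%R.
Fixpoint npow (x : nov) (n : nat) : nov :=
  match n with O => none | S k => nmul (npow x k) x end.

Definition nmono (z1 z2 : nov) (i j : nat) : nov := nmul (npow z1 i) (npow z2 j).

Definition hpartial (coef : nat -> nat -> nov) (z1 z2 : nov) (N : nat) : nov :=
  fun l => \sum_(i < N.+1) \sum_(j < N.+1 | (2 <= i + j <= N)%N)
              nmul (coef i j) (nmono z1 z2 i j) l.

Definition tconv (u : nat -> nov) (s : nov) : Prop :=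
  forall M : RR, exists N : nat, forall n : nat, (N <= n)%N ->
    (M%:E <= nval (nsub s (u n)))%E.

(* F_k(z1,z2) = C :  the series  p z1 + q z2 + sum_v coef_v z^v
   (summed by increasing total degree) converges T-adically to C *)
Definition Fcomp_eq (p q : nov) (coef : nat -> nat -> nov)
    (z1 z2 C : nov) : Prop :=
  tconv (fun N => nadd (nadd (nmul p z1) (nmul q z2)) (hpartial coef z1 z2 N)) C.

(* Main.v *)
Require Import Defs.
From HB Require Import structures.
From mathcomp Require Import all_boot all_order all_algebra.
From mathcomp Require Import all_classical all_reals.
From mathcomp Require Import ereal.
From mathcomp Require Import complex.
From mathcomp Require Import Rstruct.
From mathcomp Require Import ring lra finmap zify.
Import Order.TTheory GRing.Theory Num.Theory.
Local Open Scope classical_set_scope.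
Local Open Scope ring_scope.
Set Implicit Arguments.
Unset Strict Implicit.
Definition vg (x : nov) (r : RR) := forall l, l < r -> x l = 0.

Lemma vg_nval x r : (r%:E <= nval x)%E <-> vg x r.
Proof.
split.
- move=> H l lr; apply/eqP; apply: contraTT H => xl.
  rewrite -ltNge; apply: (le_lt_trans (y := l%:E)); last by rewrite lte_fin.
  by apply: ereal_inf_lbound; exists l.
- move=> H; apply: le_ereal_inf_tmp => _ [l /= xl <-]; rewrite lee_fin leNgt.
  by apply/negP => lr; move: xl; rewrite H ?eqxx.
Qed.

Lemma vg_le x r s : vg x r -> s <= r -> vg x s.
Proof. by move=> h sr l ls; apply: h; lra. Qed.

Lemma nmulE (x y : nov) l (A : set RR) : finite_set A ->
  (forall m, x m * y (l - m) != 0 -> A m) ->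
  nmul x y l = \sum_(m <- fset_set A) x m * y (l - m).
Proof.
move=> fA HA; rewrite /nmul -fsbig_finite //.
apply/esym/fsbig_widen => // m [_ nA] /=; apply/eqP.
by apply: contra_notT nA => /HA.
Qed.

Lemma nmul_vg x y r s : vg x r -> vg y s -> vg (nmul x y) (r + s).
Proof.
move=> hx hy l ll; rewrite /nmul fsbig1 // => m _.
case: (ltP m r) => mr; first by rewrite hx ?mul0r.
by rewrite hy ?mulr0 //; lra.
Qed.

Definition W (x : nov) (c : RR) := [set m | m < c /\ x m != 0].

Lemma W_fin x c : is_nov x -> finite_set (W x c).
Proof. by move=> h; apply: h. Qed.

Definition V (y : nov) (l r : RR) := (fun n => l - n) @` W y (l - r + 1).

Lemma V_fin y l r : is_nov y -> finite_set (V y l r).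
Proof. by move=> h; apply/finite_image/W_fin. Qed.

Lemma W_in x y l s m : vg y s -> x m * y (l - m) != 0 -> W x (l - s + 1) m.
Proof.
move=> hy; rewrite mulf_eq0 negb_or => /andP[xm ym]; split => //.
case: (ltP (l - m) s) => h; first by move: ym; rewrite hy ?eqxx.
lra.
Qed.

Lemma V_in x y l r m : vg x r -> x m * y (l - m) != 0 -> V y l r m.
Proof.
move=> hx; rewrite mulf_eq0 negb_or => /andP[xm ym].
exists (l - m); last by rewrite opprB addrC subrK.
split => //; case: (ltP m r) => h; first by move: xm; rewrite hx ?eqxx.
lra.
Qed.

Lemma vg_add x y r : vg x r -> vg y r -> vg (nadd x y) r.
Proof. by move=> hx hy l lr; rewrite /nadd hx ?hy ?addr0. Qed.
Lemma vg_opp x r : vg x r -> vg (nopp x) r.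
Proof. by move=> hx l lr; rewrite /nopp hx ?oppr0. Qed.
Lemma vg_sub x y r : vg x r -> vg y r -> vg (nsub x y) r.
Proof. by move=> hx hy; apply: vg_add => //; apply: vg_opp. Qed.
Lemma vg_zero r : vg nzero r.
Proof. by []. Qed.

Lemma nmul_addr x y y' s l : is_nov x -> vg y s -> vg y' s ->
  nmul x (nadd y y') l = nmul x y l + nmul x y' l.
Proof.
move=> nx hy hy'.
have hyy : vg (nadd y y') s by apply: vg_add.
rewrite !(@nmulE _ _ l (W x (l - s + 1))) ; try (by apply: W_fin); try (by move=> m; apply: W_in).
by rewrite -big_split; apply: eq_bigr => m _; rewrite /nadd mulrDr.
Qed.

Lemma nmul_oppr x y s l : is_nov x -> vg y s ->
  nmul x (nopp y) l = - nmul x y l.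
Proof.
move=> nx hy.
have hyy : vg (nopp y) s by apply: vg_opp.
rewrite !(@nmulE _ _ l (W x (l - s + 1))) ; try (by apply: W_fin); try (by move=> m; apply: W_in).
by rewrite -sumrN; apply: eq_bigr => m _; rewrite /nopp mulrN.
Qed.

Lemma nmul_subr x y y' s l : is_nov x -> vg y s -> vg y' s ->
  nmul x (nsub y y') l = nmul x y l - nmul x y' l.
Proof.
move=> nx hy hy'; rewrite /nsub (nmul_addr l nx hy) ?(nmul_oppr l nx hy') //.
exact: vg_opp.
Qed.

Lemma nmul_addl x x' y r l : is_nov y -> vg x r -> vg x' r ->
  nmul (nadd x x') y l = nmul x y l + nmul x' y l.
Proof.
move=> ny hx hx'.
have hxx : vg (nadd x x') r by apply: vg_add.
rewrite !(@nmulE _ _ l (V y l r)) ; try (by apply: V_fin); try (by move=> m; apply: V_in).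
by rewrite -big_split; apply: eq_bigr => m _; rewrite /nadd mulrDl.
Qed.

Lemma nmul_oppl x y r l : is_nov y -> vg x r ->
  nmul (nopp x) y l = - nmul x y l.
Proof.
move=> ny hx.
have hxx : vg (nopp x) r by apply: vg_opp.
rewrite !(@nmulE _ _ l (V y l r)) ; try (by apply: V_fin); try (by move=> m; apply: V_in).
by rewrite -sumrN; apply: eq_bigr => m _; rewrite /nopp mulNr.
Qed.

Lemma nmul_subl x x' y r l : is_nov y -> vg x r -> vg x' r ->
  nmul (nsub x x') y l = nmul x y l - nmul x' y l.
Proof.
move=> ny hx hx'; rewrite /nsub (nmul_addl l ny hx) ?(nmul_oppl l ny hx') //.
exact: vg_opp.
Qed.

Lemma nmul_nz x y l : nmul x y l != 0 -> exists m, x m * y (l - m) != 0.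
Proof.
move=> h; apply: contrapT => hn; move/eqP: h; apply; rewrite /nmul fsbig1 //.
move=> m _; case: (eqVneq (x m * y (l - m)) 0) => // hm.
by exfalso; apply: hn; exists m.
Qed.

Lemma nmul_nov x y r s : is_nov x -> is_nov y -> vg x r -> vg y s ->
  is_nov (nmul x y).
Proof.
move=> nx ny hx hy M.
apply: (sub_finite_set _ (finite_image2 +%R (W_fin (M - s) nx) (W_fin (M - r) ny))).
move=> l [lM /nmul_nz [m]]; rewrite mulf_eq0 negb_or => /andP[xm ym].
have mr : r <= m by case: (ltP m r) => // h; move: xm; rewrite hx ?eqxx.
have ms : s <= l - m by case: (ltP (l - m) s) => // h; move: ym; rewrite hy ?eqxx.
exists m; first by split => //; lra.
exists (l - m); first by split => //; lra.
by rewrite addrC subrK.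
Qed.

Lemma is_nov_ext f g : (forall l, f l = g l) -> is_nov f -> is_nov g.
Proof. by move=> e; have -> : g = f by apply/funext => l; rewrite e. Qed.

Lemma nov_zero : is_nov nzero.
Proof. by move=> M; apply: (sub_finite_set _ (@finite_set0 RR)) => l [_]; rewrite eqxx. Qed.


Lemma nov_add x y : is_nov x -> is_nov y -> is_nov (nadd x y).
Proof.
move=> nx ny M.
have hf : finite_set (W x M `|` W y M) by rewrite finite_setU; split; apply: W_fin.
apply: (sub_finite_set _ hf) => l [lM]; rewrite /nadd.
case: (eqVneq (x l) 0) => [-> |xl]; last by left.
by rewrite add0r => yl; right.
Qed.

Lemma nov_opp x : is_nov x -> is_nov (nopp x).
Proof.
move=> nx M; apply: (sub_finite_set _ (W_fin M nx)) => l [lM].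
by rewrite /nopp oppr_eq0.
Qed.

Lemma nov_sub x y : is_nov x -> is_nov y -> is_nov (nsub x y).
Proof. by move=> nx ny; apply: nov_add => //; apply: nov_opp. Qed.

Lemma nov_none : is_nov none.
Proof.
move=> M; apply: (sub_finite_set _ (finite_set1 (0:RR))) => l [_]; rewrite /none; case: ifP => [/eqP -> //|_]; by rewrite eqxx.
Qed.

Lemma vg_none : vg none 0.
Proof. by move=> l l0; rewrite /none; case: ifP => // /eqP e; move: l0; rewrite e ltxx. Qed.

Lemma nov_big (I : Type) (r : seq I) (P : pred I) (F : I -> nov) :
  (forall i, P i -> is_nov (F i)) ->
  is_nov (fun l => \sum_(i <- r | P i) F i l).
Proof.
move=> hF; elim: r => [|i r IH].
  by apply: (is_nov_ext _ nov_zero) => l; rewrite big_nil.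
case: (boolP (P i)) => Pi.
  apply: (is_nov_ext _ (nov_add (hF i Pi) IH)) => l.
  by rewrite big_cons Pi.
by apply: (is_nov_ext _ IH) => l; rewrite big_cons (negbTE Pi).
Qed.

Lemma vg_big (I : Type) (r : seq I) (P : pred I) (F : I -> nov) t :
  (forall i, P i -> vg (F i) t) ->
  vg (fun l => \sum_(i <- r | P i) F i l) t.
Proof. by move=> hF l lt; rewrite big1 // => i Pi; apply: hF. Qed.

Definition sh (r : RR) (al : CC) (x : nov) : nov := fun l => x (l + r) / al.

Lemma nov_sh r al x : is_nov x -> is_nov (sh r al x).
Proof.
move=> nx M; apply: (sub_finite_set _ (finite_image (fun n => n - r) (W_fin (M + r) nx))).
move=> l [lM]; rewrite /sh mulf_eq0 negb_or => /andP[xl _].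
by exists (l + r); [split => //; lra | rewrite addrK].
Qed.

Lemma vg_sh r al x t : vg x t -> vg (sh r al x) (t - r).
Proof. by move=> hx l lt; rewrite /sh hx ?mul0r //; lra. Qed.

Definition stab (u : nat -> nov) l := exists N, forall n, (N <= n)%N -> u n l = u N l.
Definition nlim (u : nat -> nov) : nov :=
  fun l => u (xget 0%N [set N | forall n, (N <= n)%N -> u n l = u N l]) l.


Lemma nlimE u l : stab u l -> exists N, forall n, (N <= n)%N -> u n l = nlim u l.
Proof.
move=> h; have := xgetPex 0%N h; rewrite /nlim.
by move: (xget 0%N _) => N hN; exists N => n nN; rewrite hN.
Qed.

Definition ncauchy (u : nat -> nov) := forall M, exists N, forall n l,
  (N <= n)%N -> l < M -> u n l = u N l.
Definition nconv (u : nat -> nov) s := forall M, exists N, forall n,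
  (N <= n)%N -> vg (nsub s (u n)) M.

Lemma cauchy_conv u : ncauchy u -> nconv (u) (nlim u).
Proof.
move=> hu M; have [N hN] := hu M; exists N => n nN l lM.
have st : stab u l by exists N => k kN; apply: hN.
have [N1 h1] := nlimE st.
have e1 := h1 (maxn n N1) (leq_maxr _ _).
have e2 := hN (maxn n N1) l (leq_trans nN (leq_maxl _ _)) lM.
rewrite /nsub /nadd /nopp -e1 e2 -(hN n l nN lM); exact: subrr.
Qed.

Lemma conv_pt u s M : nconv u s -> exists N, forall n l, (N <= n)%N -> l < M -> s l = u n l.
Proof.
move=> h; have [N hN] := h M; exists N => n l nN lM.
by apply/eqP; rewrite -subr_eq0; apply/eqP; apply: (hN n nN).
Qed.

Lemma nlim_nov u : ncauchy u -> (forall n, is_nov (u n)) -> is_nov (nlim u).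
Proof.
move=> hu nu M; have [N hN] := conv_pt M (cauchy_conv hu).
apply: (sub_finite_set _ (W_fin M (nu N))) => l [lM].
by rewrite (hN N l) //.
Qed.

Lemma conv_uniq u s s' : nconv u s -> nconv u s' -> s = s'.
Proof.
move=> h h'; apply/funext => l.
have [N1 h1] := conv_pt (l + 1) h; have [N2 h2] := conv_pt (l + 1) h'.
rewrite (h1 (maxn N1 N2) l) ?leq_maxl //; last lra.
by rewrite (h2 (maxn N1 N2) l) ?leq_maxr //; lra.
Qed.

Lemma conv_vg u s t : nconv u s -> (forall n, vg (u n) t) -> vg s t.
Proof.
move=> h hu l lt; have [N hN] := conv_pt (l + 1) h.
by rewrite (hN N l) //; [apply: hu | lra].
Qed.

Lemma conv_addl u s x : nconv u s -> nconv (fun n => nadd x (u n)) (nadd x s).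
Proof.
move=> h M; have [N hN] := h M; exists N => n nN l lM.
have := hN n nN l lM; rewrite /nsub /nadd /nopp => e.
by rewrite opprD addrACA subrr add0r.
Qed.

Lemma tconv_conv u s : tconv u s <-> nconv u s.
Proof.
split => h M; have [N hN] := h M; exists N => n nN.
  by apply/vg_nval; apply: hN.
by apply/vg_nval; apply: hN.
Qed.

Lemma vg_eq f g t : (forall l, f l = g l) -> vg g t -> vg f t.
Proof. by move=> e h l lt; rewrite e h. Qed.

Lemma mulrn_ge2 (e : RR) k : 0 <= e -> (2 <= k)%N -> e + e <= e *+ k.
Proof.
move=> e0 k2; rewrite -(subnKC k2) mulrnDr mulr2n lerDl.
exact: mulrn_wge0.
Qed.

Lemma arch (e x M : RR) : 0 < e -> exists N : nat, M <= x + e *+ N.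
Proof.
move=> e0; exists (Num.Def.archi_bound (`|M - x| / e)).
have h := @archi_boundP _ (`|M - x| / e) (divr_ge0 (normr_ge0 _) (ltW e0)).
rewrite -mulr_natr.
have h2 : `|M - x| <= e * (Num.Def.archi_bound (`|M - x| / e))%:R.
  by rewrite -ler_pdivrMl // mulrC ltW.
have := ler_norm (M - x); lra.
Qed.

Lemma pow_props z e i : is_nov z -> vg z e -> 0 <= e ->
  is_nov (npow z i) /\ vg (npow z i) (e *+ i).
Proof.
move=> nz hz e0; elim: i => [|i [ni hi]] /=; first by split; [exact: nov_none | exact: vg_none].
split; first exact: (nmul_nov ni nz hi hz).
by rewrite mulrSr; apply: nmul_vg.
Qed.

Lemma pow_diff z w e t i : is_nov z -> is_nov w -> vg z e -> vg w e -> 0 <= e ->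
  vg (nsub z w) t -> vg (nsub (npow z i) (npow w i)) (t + e *+ i - e).
Proof.
move=> nz nw hz hw e0 hzw; elim: i => [|i IH] /=.
  by move=> l _; rewrite /nsub /nadd /nopp subrr.
have [nzi hzi] := pow_props i nz hz e0.
have [nwi hwi] := pow_props i nw hw e0.
apply: (@vg_eq _ (nadd (nmul (nsub (npow z i) (npow w i)) z) (nmul (npow w i) (nsub z w)))).
  move=> l; rewrite /nadd (nmul_subl l nz hzi hwi) (nmul_subr l nwi hz hw).
  by rewrite /nsub /nadd /nopp; ring.
apply: vg_add.
  by apply: (vg_le (nmul_vg IH hz)); rewrite mulrSr; lra.
by apply: (vg_le (nmul_vg hwi hzw)); rewrite mulrSr; lra.
Qed.

Lemma mono_props z1 z2 e i j : is_nov z1 -> is_nov z2 -> vg z1 e -> vg z2 e -> 0 <= e ->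
  is_nov (nmono z1 z2 i j) /\ vg (nmono z1 z2 i j) (e *+ (i + j)).
Proof.
move=> n1 n2 h1 h2 e0.
have [p1 q1] := pow_props i n1 h1 e0; have [p2 q2] := pow_props j n2 h2 e0.
split; first exact: (nmul_nov p1 p2 q1 q2).
by rewrite mulrnDr; apply: nmul_vg.
Qed.

Lemma mono_diff z1 z2 w1 w2 e t i j :
  is_nov z1 -> is_nov z2 -> is_nov w1 -> is_nov w2 ->
  vg z1 e -> vg z2 e -> vg w1 e -> vg w2 e -> 0 <= e ->
  vg (nsub z1 w1) t -> vg (nsub z2 w2) t ->
  vg (nsub (nmono z1 z2 i j) (nmono w1 w2 i j)) (t + e *+ (i + j) - e).
Proof.
move=> nz1 nz2 nw1 nw2 hz1 hz2 hw1 hw2 e0 d1 d2.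
have [p1 q1] := pow_props i nz1 hz1 e0; have [p2 q2] := pow_props j nz2 hz2 e0.
have [p3 q3] := pow_props i nw1 hw1 e0; have [p4 q4] := pow_props j nw2 hw2 e0.
have r1 := pow_diff (i:=i) nz1 nw1 hz1 hw1 e0 d1.
have r2 := pow_diff (i:=j) nz2 nw2 hz2 hw2 e0 d2.
apply: (@vg_eq _ (nadd (nmul (nsub (npow z1 i) (npow w1 i)) (npow z2 j))
                       (nmul (npow w1 i) (nsub (npow z2 j) (npow w2 j))))).
  move=> l; rewrite /nadd /nmono (nmul_subl l p2 q1 q3) (nmul_subr l p3 q2 q4).
  by rewrite /nsub /nadd /nopp; ring.
rewrite mulrnDr; apply: vg_add.
  by apply: (vg_le (nmul_vg r1 q2)); lra.
by apply: (vg_le (nmul_vg q3 r2)); lra.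
Qed.

Lemma sum_widen (F : nat -> nat -> CC) N K : (N < K)%N ->
  \sum_(i < N.+1) \sum_(j < N.+1 | (2 <= i + j <= N)%N) F i j =
  \sum_(i < K) \sum_(j < K | (2 <= i + j <= N)%N) F i j.
Proof.
move=> NK.
rewrite (big_ord_widen K (fun i => \sum_(j < N.+1 | (2 <= i + j <= N)%N) F i j)) //.
rewrite big_mkcond; apply: eq_bigr => i _; case: ifP => iN.
  rewrite (big_ord_widen_cond K (fun j => (2 <= i + j <= N)%N)) //.
  apply: eq_bigl => j; apply: andb_idr => /andP[_ h].
  by rewrite ltnS (leq_trans _ h) // leq_addl.
rewrite big1 // => j /andP[_ h]; move: iN; rewrite ltnS.
by rewrite (leq_trans (leq_addr j i) h).
Qed.

Lemma mulrn_le (e : RR) a b : 0 <= e -> (a <= b)%N -> e *+ a <= e *+ b.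
Proof. by move=> e0 ab; rewrite -(subnKC ab) mulrnDr lerDl mulrn_wge0. Qed.

Section HP.
Variables (coef : nat -> nat -> nov) (v e : RR).
Hypothesis Hc : forall i j, (2 <= i + j)%N -> is_nov (coef i j) /\ vg (coef i j) v.
Hypothesis e0 : 0 < e.

Definition Tm z1 z2 i j := nmul (coef i j) (nmono z1 z2 i j).

Lemma Tm_props z1 z2 i j : (2 <= i + j)%N ->
  is_nov z1 -> is_nov z2 -> vg z1 e -> vg z2 e ->
  is_nov (Tm z1 z2 i j) /\ vg (Tm z1 z2 i j) (v + e *+ (i + j)).
Proof.
move=> ij n1 n2 h1 h2; have [nc hc] := Hc ij.
have [nm hm] := mono_props i j n1 n2 h1 h2 (ltW e0).
by split; [exact: nmul_nov nc nm hc hm | exact: nmul_vg].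
Qed.

Lemma hp_stable z1 z2 N n l : is_nov z1 -> is_nov z2 -> vg z1 e -> vg z2 e ->
  (N <= n)%N -> l < v + e *+ N.+1 -> hpartial coef z1 z2 n l = hpartial coef z1 z2 N l.
Proof.
move=> n1 n2 h1 h2 Nn lt.
rewrite /hpartial (@sum_widen (fun i j => nmul (coef i j) (nmono z1 z2 i j) l) n n.+1) //.
rewrite (@sum_widen (fun i j => nmul (coef i j) (nmono z1 z2 i j) l) N n.+1) //.
apply: eq_bigr => i _; rewrite [LHS]big_mkcond [RHS]big_mkcond.
apply: eq_bigr => j _.
case: (boolP (2 <= i + j <= N)%N) => h.
  by case/andP: h => k1 k2; rewrite ifT // k1 (leq_trans k2 Nn).
case: ifP => // h'.
have ij : (2 <= i + j)%N by case/andP: h'.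
have hN : (N < i + j)%N by move: h; rewrite negb_and ij /= -ltnNge.
have [_ hv] := Tm_props ij n1 n2 h1 h2.
rewrite -/(Tm z1 z2 i j) hv //.
apply: (lt_le_trans lt); rewrite lerD2l; apply: mulrn_le => //; exact: ltW.
Qed.

Lemma hp_nov z1 z2 N : is_nov z1 -> is_nov z2 -> vg z1 e -> vg z2 e ->
  is_nov (hpartial coef z1 z2 N).
Proof.
move=> n1 n2 h1 h2; rewrite /hpartial.
apply: (@nov_big _ _ _ (fun (i : 'I_N.+1) l => \sum_(j < N.+1 | (2 <= i + j <= N)%N) nmul (coef i j) (nmono z1 z2 i j) l)) => i _.
apply: (@nov_big _ _ _ (fun (j : 'I_N.+1) l => nmul (coef i j) (nmono z1 z2 i j) l)) => j /andP[ij _].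
by have [] := Tm_props ij n1 n2 h1 h2.
Qed.

Lemma hp_vg z1 z2 N : is_nov z1 -> is_nov z2 -> vg z1 e -> vg z2 e ->
  vg (hpartial coef z1 z2 N) (v + e + e).
Proof.
move=> n1 n2 h1 h2 l lt; rewrite /hpartial big1 // => i _.
rewrite big1 // => j /andP[ij _].
have [_ hv] := Tm_props ij n1 n2 h1 h2.
rewrite -/(Tm z1 z2 i j) hv //; apply: (lt_le_trans lt).
by rewrite -addrA lerD2l; apply: mulrn_ge2 => //; apply: ltW.
Qed.

Definition Nl z1 z2 := nlim (fun k => hpartial coef z1 z2 k).

Lemma hp_cauchy z1 z2 : is_nov z1 -> is_nov z2 -> vg z1 e -> vg z2 e ->
  ncauchy (fun k => hpartial coef z1 z2 k).
Proof.
move=> n1 n2 h1 h2 M; have [N hN] := arch v M e0; exists N => n l Nn lM.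
apply: hp_stable => //; apply: (lt_le_trans lM); apply: (le_trans hN).
by rewrite lerD2l mulrSr lerDl ltW.
Qed.

Lemma Nl_conv z1 z2 : is_nov z1 -> is_nov z2 -> vg z1 e -> vg z2 e ->
  nconv (fun k => hpartial coef z1 z2 k) (Nl z1 z2).
Proof. by move=> *; apply: cauchy_conv; apply: hp_cauchy. Qed.

Lemma Nl_nov z1 z2 : is_nov z1 -> is_nov z2 -> vg z1 e -> vg z2 e ->
  is_nov (Nl z1 z2).
Proof. by move=> *; apply: nlim_nov; [apply: hp_cauchy | move=> n; apply: hp_nov]. Qed.

Lemma Nl_vg z1 z2 : is_nov z1 -> is_nov z2 -> vg z1 e -> vg z2 e ->
  vg (Nl z1 z2) (v + e + e).
Proof. by move=> *; apply: conv_vg; [apply: Nl_conv | move=> n; apply: hp_vg]. Qed.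

Lemma Nl_diff z1 z2 w1 w2 t :
  is_nov z1 -> is_nov z2 -> is_nov w1 -> is_nov w2 ->
  vg z1 e -> vg z2 e -> vg w1 e -> vg w2 e ->
  vg (nsub z1 w1) t -> vg (nsub z2 w2) t ->
  vg (nsub (Nl z1 z2) (Nl w1 w2)) (v + t + e).
Proof.
move=> nz1 nz2 nw1 nw2 hz1 hz2 hw1 hw2 d1 d2 l lt.
have [N1 e1] := conv_pt (l + 1) (Nl_conv nz1 nz2 hz1 hz2).
have [N2 e2] := conv_pt (l + 1) (Nl_conv nw1 nw2 hw1 hw2).
have k1 : (N1 <= maxn N1 N2)%N by apply: leq_maxl.
have k2 : (N2 <= maxn N1 N2)%N by apply: leq_maxr.
rewrite /nsub /nadd /nopp (e1 _ l k1); last lra.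
rewrite (e2 _ l k2); last lra.
rewrite /hpartial -sumrB big1 // => i _; rewrite -sumrB big1 // => j /andP[ij _].
have [nc hc] := Hc ij.
have [nm1 hm1] := mono_props i j nz1 nz2 hz1 hz2 (ltW e0).
have [nm2 hm2] := mono_props i j nw1 nw2 hw1 hw2 (ltW e0).
rewrite -(nmul_subr l nc hm1 hm2).
apply: (nmul_vg hc (mono_diff (i:=i) (j:=j) nz1 nz2 nw1 nw2 hz1 hz2 hw1 hw2 (ltW e0) d1 d2)).
have := mulrn_ge2 (ltW e0) ij; lra.
Qed.

End HP.

Section Banach.
Variables (F1 F2 : nov -> nov -> nov) (e p1 p2 g : RR).
Hypothesis e0 : 0 < e.
Hypothesis g0 : 0 < g.
Definition Bl x := is_nov x /\ vg x e.
Hypothesis Fball : forall z1 z2, Bl z1 -> Bl z2 -> Bl (F1 z1 z2) /\ Bl (F2 z1 z2).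
Hypothesis Fcontr : forall z1 z2 w1 w2 t, Bl z1 -> Bl z2 -> Bl w1 -> Bl w2 ->
  vg (nsub z1 w1) (t + p1) -> vg (nsub z2 w2) (t + p2) ->
  vg (nsub (F1 z1 z2) (F1 w1 w2)) (t + g + p1) /\
  vg (nsub (F2 z1 z2) (F2 w1 w2)) (t + g + p2).

Definition t0 := e - `|p1| - `|p2|.


Lemma ball_diff1 x y : Bl x -> Bl y -> vg (nsub x y) (t0 + p1).
Proof.
move=> [_ hx] [_ hy]; apply: (vg_le (vg_sub hx hy)); rewrite /t0.
have := ler_norm p1; have := normr_ge0 p2; lra.
Qed.

Lemma ball_diff2 x y : Bl x -> Bl y -> vg (nsub x y) (t0 + p2).
Proof.
move=> [_ hx] [_ hy]; apply: (vg_le (vg_sub hx hy)); rewrite /t0.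
have := ler_norm p2; have := normr_ge0 p1; lra.
Qed.

Lemma vg_zero_pt x : (forall M, vg x M) -> x = nzero.
Proof. by move=> h; apply/funext => l; apply: (h (l + 1)); lra. Qed.

Lemma nsub_eq0 x y : nsub x y = nzero -> x = y.
Proof.
move=> h; apply/funext => l; have := congr1 (fun f => f l) h.
by rewrite /nsub /nadd /nopp /nzero => /eqP; rewrite subr_eq0 => /eqP.
Qed.

Lemma fix_uniq z1 z2 w1 w2 : Bl z1 -> Bl z2 -> Bl w1 -> Bl w2 ->
  z1 = F1 z1 z2 -> z2 = F2 z1 z2 -> w1 = F1 w1 w2 -> w2 = F2 w1 w2 ->
  z1 = w1 /\ z2 = w2.
Proof.
move=> bz1 bz2 bw1 bw2 ez1 ez2 ew1 ew2.
have key : forall n, vg (nsub z1 w1) (t0 + g *+ n + p1) /\ vg (nsub z2 w2) (t0 + g *+ n + p2).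
  elim => [|n [IH1 IH2]].
    by rewrite mulr0n addr0; split; [apply: ball_diff1 | apply: ball_diff2].
  have [h1 h2] := Fcontr bz1 bz2 bw1 bw2 IH1 IH2.
  by rewrite mulrSr addrA; rewrite -ez1 -ez2 -ew1 -ew2 in h1 h2.
split; apply: nsub_eq0; apply: vg_zero_pt => M.
  have [N hN] := arch (t0 + p1) M g0; have [k _] := key N.
  by apply: (vg_le k); lra.
have [N hN] := arch (t0 + p2) M g0; have [_ k] := key N.
by apply: (vg_le k); lra.
Qed.

Fixpoint it (n : nat) : nov * nov :=
  match n with
  | O => (nzero, nzero)
  | S k => (F1 (it k).1 (it k).2, F2 (it k).1 (it k).2)
  end.

Lemma it_ball n : Bl (it n).1 /\ Bl (it n).2.
Proof.
elim: n => [|n [h1 h2]] /=; first by split; split; [exact: nov_zero | exact: vg_zero | exact: nov_zero | exact: vg_zero].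
exact: Fball.
Qed.

Lemma it_step n : vg (nsub (it n.+1).1 (it n).1) (t0 + g *+ n + p1) /\
                  vg (nsub (it n.+1).2 (it n).2) (t0 + g *+ n + p2).
Proof.
elim: n => [|n [h1 h2]].
  have [b1 b2] := it_ball 1; have [c1 c2] := it_ball 0.
  by rewrite mulr0n addr0; split; [apply: ball_diff1 | apply: ball_diff2].
have [b1 b2] := it_ball n.+1; have [c1 c2] := it_ball n.
have := Fcontr b1 b2 c1 c2 h1 h2.
by rewrite mulrSr addrA.
Qed.

Lemma it_far n m : (n <= m)%N ->
  vg (nsub (it m).1 (it n).1) (t0 + g *+ n + p1) /\
  vg (nsub (it m).2 (it n).2) (t0 + g *+ n + p2).
Proof.
move=> nm; rewrite -(subnKC nm); elim: (m - n)%N => [|k [IH1 IH2]].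
  by rewrite addn0; split => l _; rewrite /nsub /nadd /nopp subrr.
have [s1 s2] := it_step (n + k).
have le : g *+ n <= g *+ (n + k) by rewrite mulrnDr lerDl mulrn_wge0 // ltW.
rewrite addnS; split.
  apply: (@vg_eq _ (nadd (nsub (it (n + k).+1).1 (it (n + k)).1) (nsub (it (n + k)).1 (it n).1))).
    by move=> l; rewrite /nsub /nadd /nopp; ring.
  by apply: vg_add => //; apply: (vg_le s1); lra.
apply: (@vg_eq _ (nadd (nsub (it (n + k).+1).2 (it (n + k)).2) (nsub (it (n + k)).2 (it n).2))).
  by move=> l; rewrite /nsub /nadd /nopp; ring.
by apply: vg_add => //; apply: (vg_le s2); lra.
Qed.

Definition Z1 := nlim (fun n => (it n).1).
Definition Z2 := nlim (fun n => (it n).2).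

Lemma it_cauchy1 : ncauchy (fun n => (it n).1).
Proof.
move=> M; have [N hN] := arch (t0 + p1) M g0; exists N => n l Nn lM.
have [h _] := it_far Nn; apply/eqP; rewrite -subr_eq0; apply/eqP.
by apply: h; lra.
Qed.

Lemma it_cauchy2 : ncauchy (fun n => (it n).2).
Proof.
move=> M; have [N hN] := arch (t0 + p2) M g0; exists N => n l Nn lM.
have [_ h] := it_far Nn; apply/eqP; rewrite -subr_eq0; apply/eqP.
by apply: h; lra.
Qed.

Lemma Z_ball : Bl Z1 /\ Bl Z2.
Proof.
split; split.
- by apply: nlim_nov; [exact: it_cauchy1 | move=> n; have [[]] := it_ball n].
- by apply: conv_vg; [exact: (cauchy_conv it_cauchy1) | move=> n; have [[]] := it_ball n].
- by apply: nlim_nov; [exact: it_cauchy2 | move=> n; have [_ []] := it_ball n].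
- by apply: conv_vg; [exact: (cauchy_conv it_cauchy2) | move=> n; have [_ []] := it_ball n].
Qed.

Lemma Z_close n : vg (nsub Z1 (it n).1) (t0 + g *+ n + p1) /\
                  vg (nsub Z2 (it n).2) (t0 + g *+ n + p2).
Proof.
split => l lt.
  have [N hN] := conv_pt (l + 1) (cauchy_conv it_cauchy1).
  have [h _] := it_far (leq_maxl n N).
  have k2 : (N <= maxn n N)%N by apply: leq_maxr.
  rewrite /Z1 /nsub /nadd /nopp (hN _ l k2); last lra.
  by have := h l lt; rewrite /nsub /nadd /nopp.
have [N hN] := conv_pt (l + 1) (cauchy_conv it_cauchy2).
have [_ h] := it_far (leq_maxl n N).
have k2 : (N <= maxn n N)%N by apply: leq_maxr.
  rewrite /Z2 /nsub /nadd /nopp (hN _ l k2); last lra.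
by have := h l lt; rewrite /nsub /nadd /nopp.
Qed.

Lemma Z_fix : Z1 = F1 Z1 Z2 /\ Z2 = F2 Z1 Z2.
Proof.
have [b1 b2] := Z_ball.
have key : forall n, vg (nsub (F1 Z1 Z2) Z1) (t0 + g *+ n + p1) /\
                     vg (nsub (F2 Z1 Z2) Z2) (t0 + g *+ n + p2).
  move=> n; have [c1 c2] := it_ball n; have [d1 d2] := Z_close n.
  have [f1 f2] := Fcontr b1 b2 c1 c2 d1 d2.
  have [e1 e2] := Z_close n.+1.
  have le : g *+ n <= g *+ n.+1 by rewrite mulrSr lerDl ltW.
  split.
    apply: (@vg_eq _ (nsub (nsub (F1 Z1 Z2) (it n.+1).1) (nsub Z1 (it n.+1).1))).
      by move=> l; rewrite /nsub /nadd /nopp; ring.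
    by apply: vg_sub; [apply: (vg_le f1) | apply: (vg_le e1)]; rewrite ?mulrSr; lra.
  apply: (@vg_eq _ (nsub (nsub (F2 Z1 Z2) (it n.+1).2) (nsub Z2 (it n.+1).2))).
    by move=> l; rewrite /nsub /nadd /nopp; ring.
  by apply: vg_sub; [apply: (vg_le f2) | apply: (vg_le e2)]; rewrite ?mulrSr; lra.
split; symmetry; apply: nsub_eq0; apply: vg_zero_pt => M.
  have [N hN] := arch (t0 + p1) M g0; have [k _] := key N.
  by apply: (vg_le k); lra.
have [N hN] := arch (t0 + p2) M g0; have [_ k] := key N.
by apply: (vg_le k); lra.
Qed.

End Banach.

Lemma nmul_split (p : nov) (vp : RR) (z : nov) l : is_nov z -> vg p vp ->
  nmul p z l = p vp * z (l - vp) + nmul (fun m => if m == vp then 0 else p m) z l.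
Proof.
move=> nz hp.
pose p' := fun m => if m == vp then 0 else p m.
pose s : nov := fun m => if m == vp then p vp else 0.
have E : p = nadd p' s.
  apply/funext => m; rewrite /nadd /p' /s; case: (eqVneq m vp) => [->|_].
    by rewrite add0r.
  by rewrite addr0.
have hp' : vg p' vp by move=> m mv; rewrite /p'; case: ifP => // _; apply: hp.
have hs : vg s vp.
  by move=> m mv; rewrite /s; case: (eqVneq m vp) => // em; move: mv; rewrite em ltxx.
transitivity (nmul (nadd p' s) z l); first by rewrite -E.
rewrite (nmul_addl l nz hp' hs) addrC; congr (_ + _).
rewrite (@nmulE _ _ l [set vp]); last 2 first.
- exact: finite_set1.
- by move=> m; rewrite /s; case: (eqVneq m vp) => //; rewrite mul0r eqxx.
by rewrite fset_set1 big_seq_fset1 /s eqxx.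
Qed.

Lemma fix_to_eq (X Y C N : nov) (hp : nat -> nov) (va : RR) (al : CC) zs :
  al != 0 -> nconv hp N -> (forall l, X l = al * zs (l - va) + Y l) ->
  zs = sh va al (nsub (nsub C Y) N) -> nconv (fun k => nadd X (hp k)) C.
Proof.
move=> a0 hN hX hz.
have -> : C = nadd X N.
  apply/funext => l; rewrite /nadd hX hz /sh /nsub /nadd /nopp subrK.
  by rewrite mulrC divfK //; ring.
exact: conv_addl.
Qed.

Lemma eq_to_fix (X Y C N : nov) (hp : nat -> nov) (va : RR) (al : CC) zs :
  al != 0 -> nconv hp N -> (forall l, X l = al * zs (l - va) + Y l) ->
  nconv (fun k => nadd X (hp k)) C -> zs = sh va al (nsub (nsub C Y) N).
Proof.
move=> a0 hN hX hC.
have E : C = nadd X N := conv_uniq hC (conv_addl X hN).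
apply/funext => l; rewrite /sh /nsub /nadd /nopp E /nadd hX addrK.
rewrite [X in X / al](_ : _ = al * zs l); first by rewrite mulrC mulKf.
ring.
Qed.

Lemma sh_diff va al C Yz Yw Nz Nw r :
  vg (nsub Yz Yw) (r + va) -> vg (nsub Nz Nw) (r + va) ->
  vg (nsub (sh va al (nsub (nsub C Yz) Nz)) (sh va al (nsub (nsub C Yw) Nw))) r.
Proof.
move=> h1 h2 l lr.
have k1 : l + va < r + va by lra.
move: (h1 _ k1) (h2 _ k1); rewrite /sh /nsub /nadd /nopp.
move=> /eqP; rewrite subr_eq0 => /eqP -> /eqP; rewrite subr_eq0 => /eqP ->.
exact: subrr.
Qed.

Lemma gap_seq (s : seq RR) r : (forall l, l \in s -> r < l) ->
  exists d, 0 < d /\ forall l, l \in s -> r + d <= l.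
Proof.
elim: s => [|x s IH] h; first by exists 1; split => // l; rewrite in_nil.
have h' : forall l, l \in s -> r < l by move=> l ls; apply: h; rewrite in_cons ls orbT.
have [d [d0 hd]] := IH h'.
have xr := h x (mem_head x s).
case: (leP d (x - r)) => dx.
  by exists d; split => // l; rewrite in_cons => /orP[/eqP -> | /hd]; lra.
by exists (x - r); split; [lra | move=> l; rewrite in_cons => /orP[/eqP -> | /hd]; lra].
Qed.

Lemma vg_gap x r : is_nov x -> vg x r -> x r = 0 -> exists d, 0 < d /\ vg x (r + d).
Proof.
move=> nx hx xr.
have [s Es] := (finite_seqP _).1 (W_fin (r + 1) nx).
have hs : forall l, l \in s -> r < l.
  move=> l ls; have : W x (r + 1) l by rewrite Es.
  case=> _ xl; case: (ltgtP l r) => // [lr|lr].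
    by move: xl; rewrite hx ?eqxx.
  by move: xl; rewrite lr xr eqxx.
have [d [d0 hd]] := gap_seq hs.
have [k [k0 k1 kd]] : exists k, [/\ 0 < k, k <= 1 & k <= d].
  by case: (leP d 1) => h; [exists d | exists 1]; split; lra.
exists k; split => // l lt; case: (eqVneq (x l) 0) => // xl.
have : [set` s] l by rewrite -Es; split => //; lra.
move=> /= /hd hl; exfalso; move: lt hl kd; clear; lra.
Qed.

Lemma val_fin x : is_nov x -> (0 < nval x)%E -> nval x <> +oo%E ->
  exists r, [/\ nval x = r%:E, 0 < r, vg x r & x r != 0].
Proof.
move=> nx; case E: (nval x) => [r| |] h0 hy //.
have hv : vg x r by apply/vg_nval; rewrite E.
exists r; split => //.

apply/eqP => xr0; have [d [d0 hd]] := vg_gap nx hv xr0.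
by have := (vg_nval _ _).2 hd; rewrite E lee_fin; lra.
Qed.

Lemma pick_v x A : (0 < nval x)%E -> exists r, vg x r /\ (nval x = r%:E \/ r = A).
Proof.
case E: (nval x) => [r| |] h0 //.
  by exists r; split; [apply/vg_nval; rewrite E | left].
by exists A; split; [apply/vg_nval; rewrite E leey | right].
Qed.

Lemma min2 (x y : RR) : 0 < x -> 0 < y -> exists w, [/\ 0 < w, w <= x & w <= y].
Proof. by move=> *; case: (leP x y) => h; [exists x | exists y]; split => //; lra. Qed.

Lemma choose_consts (e g be ka : RR) : 0 < e -> 0 < g -> 0 <= be -> 0 <= ka -> 0 < be + ka ->
  exists p m ga, [/\ 0 < ga, ga <= g, p + ga <= be, ga <= p + ka &
     [/\ m <= p, m <= 0, p + ga <= m + e & ga <= m + e]].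
Proof.
move=> e0 g0 b0 k0 s0.
have s4 : 0 < (be + ka) / 4 by lra.
have e4 : 0 < e / 4 by lra.
have [u [u0 ug us]] := min2 g0 s4.
have [ga [ga0 gu ge]] := min2 u0 e4.
have [p [p1 p2 p3 p4]] : exists p, [/\ p + ga <= be, ga <= p + ka, p <= e / 2 & - (e / 2) <= p].
  case: (leP ((be - ka) / 2) (e / 2)) => h1.
    case: (leP (- (e / 2)) ((be - ka) / 2)) => h2.
      by exists ((be - ka) / 2); split; lra.
    by exists (- (e / 2)); split; lra.
  by exists (e / 2); split; lra.
case: (leP p 0) => hp.
  by exists p, p, ga; split => //; try lra; split; lra.
by exists p, 0, ga; split => //; try lra; split; lra.
Qed.

Lemma nmul0l y : nmul nzero y = nzero.
Proof. by apply/funext => l; rewrite /nmul fsbig1 // => m _; rewrite /nzero mul0r. Qed.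

Lemma nmul0r y : nmul y nzero = nzero.
Proof. by apply/funext => l; rewrite /nmul fsbig1 // => m _; rewrite /nzero mulr0. Qed.

Lemma nsub00 : nsub nzero nzero = nzero.
Proof. by apply/funext => l; rewrite /nsub /nadd /nopp /nzero subrr. Qed.

Lemma top_zero x y : nval x = +oo%E -> (nval x <= nval y)%E -> y = nzero.
Proof.
move=> E; rewrite E leye_eq => /eqP Ey; apply: vg_zero_pt => M.
by apply/vg_nval; rewrite Ey leey.
Qed.

Unset Implicit Arguments.

Theorem lemmaA1 (eps : RR) (a b c d : nov)
  (lam eta : nat -> nat -> nov) :
  0 < eps ->
  is_nov a -> is_nov b -> is_nov c -> is_nov d ->
  (0 < nval a)%E -> (0 < nval b)%E -> (0 < nval c)%E -> (0 < nval d)%E ->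
  nsub (nmul a d) (nmul b c) <> nzero ->
  (nval a <= nval b)%E -> (nval a <= nval c)%E ->
  (nval d <= nval b)%E -> (nval d <= nval c)%E ->
  (nval a + nval d < nval b + nval c)%E ->
  (forall i j : nat, (2 <= i + j)%N -> is_nov (lam i j) /\ is_nov (eta i j)) ->
  (forall i j : nat, (2 <= i + j)%N -> (nval a <= nval (lam i j))%E) ->
  (forall i j : nat, (2 <= i + j)%N -> (nval d <= nval (eta i j))%E) ->
  (forall i j : nat, (2 <= i + j)%N -> (1 <= j)%N -> (nval d <= nval (lam i j))%E) ->
  (forall i j : nat, (2 <= i + j)%N -> (1 <= i)%N -> (nval a <= nval (eta i j))%E) ->
  forall C1 C2 : nov, is_nov C1 -> is_nov C2 ->
  (nval a + eps%:E < nval C1)%E -> (nval d + eps%:E < nval C2)%E ->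
  exists z1 z2 : nov,
    [/\ is_nov z1, is_nov z2, (eps%:E <= nval z1)%E & (eps%:E <= nval z2)%E] /\
    (Fcomp_eq a b lam z1 z2 C1 /\ Fcomp_eq c d eta z1 z2 C2) /\
    (forall w1 w2 : nov, is_nov w1 -> is_nov w2 ->
       (eps%:E <= nval w1)%E -> (eps%:E <= nval w2)%E ->
       Fcomp_eq a b lam w1 w2 C1 -> Fcomp_eq c d eta w1 w2 C2 ->
       w1 = z1 /\ w2 = z2).
Proof.
move=> e0 na nb nc nd a0 b0 c0 d0 det ab ac db dc adbc Hnov Hlam Heta _ _
  C1 C2 nC1 nC2 hC1 hC2.
have aF : nval a <> +oo%E.
  move=> Ey; apply: det.
  rewrite (top_zero Ey (le_refl _)) (top_zero Ey ab) (top_zero Ey ac).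
  by rewrite !nmul0l nsub00.
have dF : nval d <> +oo%E.
  move=> Ey; apply: det.
  rewrite (top_zero Ey (le_refl _)) (top_zero Ey db) (top_zero Ey dc).
  by rewrite !nmul0r nsub00.
have [va [Ea va0 ha al0]] := val_fin na a0 aF.
have [vd [Ed vd0 hd dl0]] := val_fin nd d0 dF.
have [vb [hb Eb]] := pick_v (va + vd + 1) b0.
have [vc [hc Ec]] := pick_v (va + vd + 1) c0.
have vab : va <= vb.
  by case: Eb => [E|->]; [move: ab; rewrite Ea E lee_fin | lra].
have vdb : vd <= vb.
  by case: Eb => [E|->]; [move: db; rewrite Ed E lee_fin | lra].
have vac : va <= vc.
  by case: Ec => [E|->]; [move: ac; rewrite Ea E lee_fin | lra].
have vdc : vd <= vc.
  by case: Ec => [E|->]; [move: dc; rewrite Ed E lee_fin | lra].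
have key3 : va + vd < vb + vc.
  case: Eb => [E1|->]; last lra.
  case: Ec => [E2|->]; last lra.
  by move: adbc; rewrite Ea Ed E1 E2 -!EFinD lte_fin.
pose a' : nov := fun m => if m == va then 0 else a m.
pose d' : nov := fun m => if m == vd then 0 else d m.
have na' : is_nov a'.
  move=> M; apply: (sub_finite_set _ (W_fin M na)) => l [lM].
  by rewrite /a'; case: ifP => //; rewrite eqxx.
have nd' : is_nov d'.
  move=> M; apply: (sub_finite_set _ (W_fin M nd)) => l [lM].
  by rewrite /d'; case: ifP => //; rewrite eqxx.
have ha'0 : vg a' va by move=> l lv; rewrite /a'; case: ifP => // _; apply: ha.
have hd'0 : vg d' vd by move=> l lv; rewrite /d'; case: ifP => // _; apply: hd.
have a'va : a' va = 0 by rewrite /a' eqxx.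
have d'vd : d' vd = 0 by rewrite /d' eqxx.
have [ga [ga0 hga]] := vg_gap na' ha'0 a'va.
have [gd [gd0 hgd]] := vg_gap nd' hd'0 d'vd.
clear a'va d'vd.
have [g [g0 gga ggd]] := min2 ga0 gd0.
have ha' : vg a' (va + g) by apply: (vg_le hga); lra.
have hd' : vg d' (vd + g) by apply: (vg_le hgd); lra.
have HcL : forall i j, (2 <= i + j)%N -> is_nov (lam i j) /\ vg (lam i j) va.
  move=> i j ij; split; first by case: (Hnov i j ij).
  by apply/vg_nval; rewrite -Ea; apply: Hlam.
have HcE : forall i j, (2 <= i + j)%N -> is_nov (eta i j) /\ vg (eta i j) vd.
  move=> i j ij; split; first by case: (Hnov i j ij).
  by apply/vg_nval; rewrite -Ed; apply: Heta.
have hC1' : vg C1 (va + eps) by apply/vg_nval; rewrite EFinD -Ea ltW.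
have hC2' : vg C2 (vd + eps) by apply/vg_nval; rewrite EFinD -Ed ltW.
have be0 : 0 <= vb - va by lra.
have ka0 : 0 <= vc - vd by lra.
have s0 : 0 < vb - va + (vc - vd) by lra.
have [p [m [ga1 [ga10 ga1g pb pk [mp m0 pm gm]]]]] := choose_consts e0 g0 be0 ka0 s0.
pose F1 z1 z2 := sh va (a va) (nsub (nsub C1 (nadd (nmul a' z1) (nmul b z2))) (Nl lam z1 z2)).
pose F2 z1 z2 := sh vd (d vd) (nsub (nsub C2 (nadd (nmul c z1) (nmul d' z2))) (Nl eta z1 z2)).
have Fball : forall z1 z2, Bl eps z1 -> Bl eps z2 -> Bl eps (F1 z1 z2) /\ Bl eps (F2 z1 z2).
  move=> z1 z2 [n1 h1] [n2 h2]; split; split.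
  - apply: nov_sh; apply: nov_sub; last exact: (Nl_nov HcL e0 n1 n2 h1 h2).
    apply: nov_sub => //; apply: nov_add.
      exact: (nmul_nov na' n1 ha' h1).
    exact: (nmul_nov nb n2 hb h2).
  - apply: (@vg_le _ ((va + eps) - va)); last lra.
    apply: vg_sh; apply: vg_sub; last first.
      by apply: (vg_le (Nl_vg HcL e0 n1 n2 h1 h2)); lra.
    apply: vg_sub => //; apply: vg_add.
      by apply: (vg_le (nmul_vg ha' h1)); lra.
    by apply: (vg_le (nmul_vg hb h2)); lra.
  - apply: nov_sh; apply: nov_sub; last exact: (Nl_nov HcE e0 n1 n2 h1 h2).
    apply: nov_sub => //; apply: nov_add.
      exact: (nmul_nov nc n1 hc h1).
    exact: (nmul_nov nd' n2 hd' h2).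
  - apply: (@vg_le _ ((vd + eps) - vd)); last lra.
    apply: vg_sh; apply: vg_sub; last first.
      by apply: (vg_le (Nl_vg HcE e0 n1 n2 h1 h2)); lra.
    apply: vg_sub => //; apply: vg_add.
      by apply: (vg_le (nmul_vg hc h1)); lra.
    by apply: (vg_le (nmul_vg hd' h2)); lra.
have Fcontr : forall z1 z2 w1 w2 t, Bl eps z1 -> Bl eps z2 -> Bl eps w1 -> Bl eps w2 ->
  vg (nsub z1 w1) (t + p) -> vg (nsub z2 w2) (t + 0) ->
  vg (nsub (F1 z1 z2) (F1 w1 w2)) (t + ga1 + p) /\
  vg (nsub (F2 z1 z2) (F2 w1 w2)) (t + ga1 + 0).
  move=> z1 z2 w1 w2 t [nz1 hz1] [nz2 hz2] [nw1 hw1] [nw2 hw2] d1 d2.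
  have d1' : vg (nsub z1 w1) (t + m) by apply: (vg_le d1); lra.
  have d2' : vg (nsub z2 w2) (t + m) by apply: (vg_le d2); lra.
  split; apply: sh_diff.
  - apply: (@vg_eq _ (nadd (nmul a' (nsub z1 w1)) (nmul b (nsub z2 w2)))).
      move=> l; rewrite /nadd (nmul_subr l na' hz1 hw1) (nmul_subr l nb hz2 hw2).
      by rewrite /nsub /nadd /nopp; ring.
    apply: vg_add.
      by apply: (vg_le (nmul_vg ha' d1)); lra.
    by apply: (vg_le (nmul_vg hb d2)); lra.
  - by apply: (vg_le (Nl_diff HcL e0 nz1 nz2 nw1 nw2 hz1 hz2 hw1 hw2 d1' d2')); lra.
  - apply: (@vg_eq _ (nadd (nmul c (nsub z1 w1)) (nmul d' (nsub z2 w2)))).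
      move=> l; rewrite /nadd (nmul_subr l nc hz1 hw1) (nmul_subr l nd' hz2 hw2).
      by rewrite /nsub /nadd /nopp; ring.
    apply: vg_add.
      by apply: (vg_le (nmul_vg hc d1)); lra.
    by apply: (vg_le (nmul_vg hd' d2)); lra.
  - by apply: (vg_le (Nl_diff HcE e0 nz1 nz2 nw1 nw2 hz1 hz2 hw1 hw2 d1' d2')); lra.
have [[nZ1 hZ1] [nZ2 hZ2]] := Z_ball ga10 Fball Fcontr.
have [fZ1 fZ2] := Z_fix ga10 Fball Fcontr.
have hX1 : forall z1 z2, is_nov z1 -> forall l,
    nadd (nmul a z1) (nmul b z2) l = a va * z1 (l - va) + nadd (nmul a' z1) (nmul b z2) l.
  by move=> z1 z2 n1 l; rewrite /nadd (nmul_split l n1 ha) addrA.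
have hX2 : forall z1 z2, is_nov z2 -> forall l,
    nadd (nmul c z1) (nmul d z2) l = d vd * z2 (l - vd) + nadd (nmul c z1) (nmul d' z2) l.
  by move=> z1 z2 n2 l; rewrite /nadd (nmul_split l n2 hd); ring.
exists (Z1 F1 F2), (Z2 F1 F2); split.
  by split => //; apply/vg_nval.
split.
  split; apply/tconv_conv.
    apply: (fix_to_eq al0 (Nl_conv HcL e0 nZ1 nZ2 hZ1 hZ2) (hX1 _ _ nZ1) fZ1).
  apply: (fix_to_eq dl0 (Nl_conv HcE e0 nZ1 nZ2 hZ1 hZ2) (hX2 _ _ nZ2) fZ2).
move=> w1 w2 nw1 nw2 hw1 hw2 E1 E2.
move/vg_nval: hw1 => hw1; move/vg_nval: hw2 => hw2.
have f1 : w1 = F1 w1 w2.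
  exact: (eq_to_fix al0 (Nl_conv HcL e0 nw1 nw2 hw1 hw2) (hX1 _ _ nw1) ((tconv_conv _ _).1 E1)).
have f2 : w2 = F2 w1 w2.
  exact: (eq_to_fix dl0 (Nl_conv HcE e0 nw1 nw2 hw1 hw2) (hX2 _ _ nw2) ((tconv_conv _ _).1 E2)).
have [u1 u2] := fix_uniq ga10 Fcontr (conj nZ1 hZ1) (conj nZ2 hZ2) (conj nw1 hw1) (conj nw2 hw2) fZ1 fZ2 f1 f2.
by split.
Qed.
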